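(* Let $n=p$, $X=I_n$, and let $\lambda=\lambda_n>0$ satisfy $\sqrt n/\lambda_n\to\infty$. Then there exists $\delta>0$ such that, as $n\to\infty$, \[ \mathbb E_{\beta^0=0}\,\Pi^{\mathrm{LASSO}}_{\lambda_n}\Big(\beta:\|\beta\|_2\le\delta\sqrt n\Big(\frac1{\lambda_n}\wedge1\Big)\ \Big|\ Y\Big)\to0. \]
   Context: Sequence model: $Y=\beta+\varepsilon$ with $\beta\in\mathbb R^n$ and $\varepsilon\sim N_n(0,I_n)$; $\mathbb E_{\beta^0=0}$ denotes expectation when $Y\sim N_n(0,I_n)$. $\Pi^{\mathrm{LASSO}}_\lambda(\cdot\mid Y)$ is the posterior distribution for the prior under which $\beta_1,\dots,\beta_n$ are i.i.d. with Laplace density $x\mapsto\frac\lambda2e^{-\lambda|x|}$, i.e. $\Pi^{\mathrm{LASSO}}_\lambda(B\mid Y)\propto\int_Be^{-\|Y-\beta\|_2^2/2-\lambda\|\beta\|_1}d\beta$ (whose mode is the LASSO estimator). *)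

(* Defs.v *)
From HB Require Import structures.
From mathcomp Require Import all_boot all_order all_algebra.
From mathcomp Require Import all_classical all_reals all_analysis.
Set Implicit Arguments. Unset Strict Implicit. Unset Printing Implicit Defensive.
Import Order.TTheory GRing.Theory Num.Theory.
Import numFieldNormedType.Exports.
Local Open Scope ring_scope.

Section Defs.
Variable R : realType.

Definition norm2 n (b : 'rV[R]_n) : R := Num.sqrt (\sum_(i < n) b 0 i ^+ 2).
Definition norm1 n (b : 'rV[R]_n) : R := \sum_(i < n) `|b 0 i|.

(* Lebesgue integral over R^n of a nonnegative extended-real function,
   computed as the iterated one-dimensional Lebesgue integral
   (equal to the integral w.r.t. n-dim Lebesgue measure by Tonelli). *)
Fixpoint intRn (n : nat) : ('rV[R]_n -> \bar R) -> \bar R :=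
  match n with
  | 0 => fun f => f 0
  | m.+1 => fun f =>
      (\int[@lebesgue_measure R]_x intRn (fun v : 'rV[R]_m =>
           f (row_mx (\row_(i < 1) x) v)))%E
  end.

(* unnormalised LASSO posterior density (Gaussian likelihood x Laplace prior) *)
Definition lasso_kernel n (lam : R) (Y b : 'rV[R]_n) : R :=
  expR (- (norm2 (Y - b)) ^+ 2 / 2 - lam * norm1 b).

Definition lasso_post n (lam : R) (Y : 'rV[R]_n) (B : set 'rV[R]_n) : \bar R :=
  (intRn (fun b => (\1_B b * lasso_kernel lam Y b)%:E) *
   (fine (intRn (fun b => (lasso_kernel lam Y b)%:E)))^-1%:E)%E.

Definition gauss_pdf n (y : 'rV[R]_n) : R :=
  (Num.sqrt (2 * pi)) ^- n * expR (- (norm2 y) ^+ 2 / 2).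

Definition E0 n (g : 'rV[R]_n -> \bar R) : \bar R :=
  intRn (fun y => ((gauss_pdf y)%:E * g y)%E).

End Defs.

(* Main.v *)
Require Import Defs.
From HB Require Import structures.
From mathcomp Require Import all_boot all_order all_algebra.
From mathcomp Require Import all_classical all_reals all_analysis.
From mathcomp Require Import ring lra measurable_realfun.
Import Order.TTheory GRing.Theory Num.Theory.
Import numFieldNormedType.Exports.
Local Open Scope classical_set_scope.
Local Open Scope ring_scope.
From mathcomp Require Import normal_distribution.
Section Gen.
Context {R : realType}.
Local Notation mu := (@lebesgue_measure R).
Local Open Scope ereal_scope.

Lemma int_mono (f g : R -> \bar R) : (forall x, 0 <= f x) -> (forall x, f x <= g x) ->
  \int[mu]_x f x <= \int[mu]_x g x.
Proof.
move=> f0 fg; have g0 : forall x, 0 <= g x by move=> x; exact: le_trans (f0 x) (fg x).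
rewrite !ge0_integralTE //; apply: ge_ereal_sup => _ [h /= hf <-].
apply: ereal_sup_ubound; exists h => //= x; exact: le_trans (hf x) (fg x).
Qed.

Lemma intRn_ge0 n (f : 'rV[R]_n -> \bar R) : (forall x, 0 <= f x) -> 0 <= intRn f.
Proof.
elim: n f => [|n IH] f f0 /=; first exact: f0.
apply: integral_ge0 => x _; apply: IH => v; exact: f0.
Qed.

Lemma intRn_mono n (f g : 'rV[R]_n -> \bar R) : (forall x, 0 <= f x) -> (forall x, f x <= g x) ->
  intRn f <= intRn g.
Proof.
elim: n f g => [|n IH] f g f0 fg /=; first exact: fg.
apply: int_mono => x; first by apply: intRn_ge0 => v; exact: f0.
apply: IH => v; [exact: f0|exact: fg].
Qed.
End Gen.
Section Gen.
Context {R : realType}.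
Local Notation mu := (@lebesgue_measure R).

Lemma row_mx_ord0 n (x : R) (v : 'rV[R]_n) :
  (row_mx (\row_(i < 1) x) v : 'rV_(n.+1)) 0 ord0 = x.
Proof.
have -> : (ord0 : 'I_(1 + n)) = lshift n ord0 by apply: val_inj.
have := row_mxEl (\row_(i < 1) x) v 0 ord0; rewrite mxE; exact.
Qed.

Lemma row_mx_lift n (x : R) (v : 'rV[R]_n) i :
  (row_mx (\row_(i < 1) x) v : 'rV_(n.+1)) 0 (lift ord0 i) = v 0 i.
Proof.
have -> : (lift ord0 i : 'I_(1 + n)) = rshift 1 i by apply: val_inj.
exact: (row_mxEr (\row_(i < 1) x) v 0 i).
Qed.

Local Open Scope ereal_scope.
Lemma intRn_prod n (c : R) (g : 'I_n -> R -> R) :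
  (0 <= c)%R -> (forall i x, (0 <= g i x)%R) -> (forall i, measurable_fun setT (g i)) ->
  intRn (fun v : 'rV[R]_n => (c * \prod_i g i (v 0 i))%:E) =
  c%:E * \prod_i (\int[mu]_x (g i x)%:E).
Proof.
elim: n c g => [|n IH] c g c0 g0 mg /=.
  by rewrite !big_ord0 mulr1 mule1.
transitivity (\int[mu]_x ((c * g ord0 x)%:E *
    \prod_(i < n) \int[mu]_y (g (lift ord0 i) y)%:E)).
  apply: eq_integral => x _.
  rewrite -IH //; last by rewrite mulr_ge0.
  congr intRn; apply/funext => v; rewrite big_ord_recl mulrA row_mx_ord0.
  by congr ((_ * _)%:E); apply: eq_bigr => i _; rewrite row_mx_lift.
rewrite ge0_integralZr //.
- rewrite big_ord_recl muleA; congr (_ * _).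
  under eq_integral do rewrite EFinM.
  rewrite ge0_integralZl_EFin //.
    by move=> x _; rewrite lee_fin.
  by apply/measurable_EFinP; exact: mg.
- apply/measurable_EFinP; apply: measurable_funM => //; exact: mg.
- by move=> x _; rewrite lee_fin mulr_ge0.
- by apply: prode_ge0 => i _; apply: integral_ge0 => x _; rewrite lee_fin.
Qed.
End Gen.
Section S.
Context {R : realType}.
Local Notation mu := (@lebesgue_measure R).

Lemma derive1_shift (d x : R) : derive1 (fun z : R => z + d) x = 1.
Proof. by rewrite derive1E; apply: derive_val; exact: is_derive_shift. Qed.

Lemma int_shift (G : R -> R) (d : R) : continuous G -> (forall x, 0 <= G x) ->
  (\int[mu]_x (G x)%:E = \int[mu]_x (G (x + d))%:E)%E.
Proof.
move=> cG G0.
rewrite (@increasing_ge0_integration_by_substitutionT R (fun z : R => z + d) G) //.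
- apply: eq_integral => x _.
  by change ((G (x + d) * derive1 (fun z => z + d) x)%:E = (G (x + d))%:E); rewrite derive1_shift mulr1.
- by move=> x y xy; rewrite /= ltrD2r.
- have -> : derive1 (fun z : R => z + d) = cst 1 by apply/funext => x; exact: derive1_shift.
  exact: cst_continuous.
- have -> : derive1 (fun z : R => z + d) = cst 1 by apply/funext => x; exact: derive1_shift.
  exact: is_cvg_cst.
- have -> : derive1 (fun z : R => z + d) = cst 1 by apply/funext => x; exact: derive1_shift.
  exact: is_cvg_cst.
- exact: cvg_addrr_Ny.
- exact: cvg_addrr.
Qed.
End S.
Section U.
Context {R : realType}.
Definition uf (a b : R) : R := Num.min 1 (Num.max 0 (2 - 2 * `|b| / a)).

Lemma uf_ge0 a b : 0 <= uf a b.
Proof. by rewrite /uf le_min ler01 le_max lexx. Qed.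
Lemma uf_le1 a b : uf a b <= 1.
Proof. by rewrite /uf ge_min lexx. Qed.
Lemma uf0 a b : 0 < a -> a <= `|b| -> uf a b = 0.
Proof.
move=> a0 ab; rewrite /uf max_l ?min_r //.
have : 1 <= `|b| / a by rewrite ler_pdivlMr // mul1r.
rewrite -mulrA; lra.
Qed.
Lemma uf1 a b : 0 < a -> `|b| <= a / 2 -> uf a b = 1.
Proof.
move=> a0 ab; rewrite /uf max_r ?min_l //.
  have : `|b| / a <= 1 / 2 by rewrite ler_pdivrMr // mulrAC mul1r.
  rewrite -mulrA; lra.
have : `|b| / a <= 1 / 2 by rewrite ler_pdivrMr // mulrAC mul1r.
rewrite -mulrA; lra.
Qed.

Lemma expR_m9 : expR (-9 : R) <= 1 / 10.
Proof.
have h : 10 <= expR (9 : R) by have := @expR_ge1Dx R 9; lra.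
rewrite expRN mul1r.
have h0 : 0 < expR (9:R) := expR_gt0 _.
rewrite -[X in _ <= X]mul1r ler_pdivlMr; last lra.
by rewrite mulrC ler_pdivrMr // mul1r.
Qed.

Lemma P1 (a b : R) : 0 < a -> expR (- (36 / a ^+ 2) * b ^+ 2) <= uf a b + 1 / 10.
Proof.
move=> a0; have [hb|hb] := lerP (`|b|) (a / 2).
  rewrite uf1 //; suff : expR (- (36 / a ^+ 2) * b ^+ 2) <= 1 by lra.
  by rewrite -expR0 ler_expR mulNr oppr_le0 mulr_ge0 ?sqr_ge0 // divr_ge0 // exprn_ge0 // ltW.
have := uf_ge0 a b; suff : expR (- (36 / a ^+ 2) * b ^+ 2) <= 1/10 by lra.
apply: le_trans expR_m9; rewrite ler_expR mulNr lerN2.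
have nb : `|b| ^+ 2 = b ^+ 2 by rewrite real_normK ?num_real.
have hb2 : a ^+ 2 / 4 <= b ^+ 2.
  have h2 : 0 <= a / 2 by lra.
  have h3 := ler_pM h2 h2 (ltW hb) (ltW hb).
  rewrite -nb !expr2; nra.
have e : 36 / a ^+ 2 * (a ^+ 2 / 4) = 9.
  by field; rewrite gt_eqF.
rewrite -e; apply: ler_wpM2l => //.
by rewrite divr_ge0 // exprn_ge0 // ltW.
Qed.
End U.
Section V.
Context {R : realType}.
Definition kf (lam y b : R) : R := expR (- (y - b) ^+ 2 / 2 - lam * `|b|).

Lemma kf_ge0 lam y b : 0 <= kf lam y b.
Proof. exact: expR_ge0. Qed.

Lemma P2 (a b d : R) : 0 < a -> `|d| = 2 * a -> uf a b + uf a (b - d) <= 1.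
Proof.
move=> a0 hd; have [hb|hb] := lerP a (`|b|).
  by rewrite uf0 // add0r uf_le1.
rewrite (@uf0 _ a (b - d)) // ?addr0 ?uf_le1 //.
have := ler_normD b (d - b); rewrite addrC subrK distrC; lra.
Qed.

Lemma P3 (lam y a b d : R) : 0 < a -> a <= 1/4 -> 0 <= lam -> a * lam <= 1/4 ->
  d = (if 0 <= y then 2 * a else - (2 * a)) ->
  1/4 * (uf a b * kf lam y b) <= uf a b * kf lam y (b + d).
Proof.
move=> a0 a4 l0 al hd; have [hb|hb] := lerP a (`|b|).
  by rewrite uf0 // !mul0r mulr0.
rewrite mulrCA; apply: ler_wpM2l; first exact: uf_ge0.
rewrite /kf.
suff h : - (y - b) ^+ 2 / 2 - lam * `|b| - 3/4 <= - (y - (b + d)) ^+ 2 / 2 - lam * `|b + d|.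
  apply: le_trans (_ : expR (- (y - b) ^+ 2 / 2 - lam * `|b| - 3/4) <= _); last by rewrite ler_expR.
  set e := (- (y - b) ^+ 2 / 2 - lam * `|b|).
  rewrite (expRD e) [X in X <= _]mulrC; apply: ler_wpM2l; first exact: expR_ge0.
  have := @expR_ge1Dx R (- (3/4)); lra.
have Bb : b <= `|b| := ler_norm b.
have Bb' : - b <= `|b| by rewrite -normrN ler_norm.
move: hb; rewrite ltr_norml => /andP[hb1 hb2].
have h4 : a * a <= 1/16 by nra.
have h3 : a * (a - b) >= 0 by nra.
case: ifP hd => y0 hd; subst d.
- have -> : `|b + 2 * a| = b + 2 * a by rewrite ger0_norm //; lra.
  have h1 : 0 <= a * y by nra.
  have h5 : 0 <= lam * (`|b| - b) by nra.
  nra.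
- have -> : `|b + - (2 * a)| = - (b + - (2 * a)) by rewrite ler0_norm //; lra.
  have h1 : 0 <= - (a * y) by move/negbT: y0; rewrite -ltNge => y0; nra.
  have h3' : a * (a + b) >= 0 by nra.
  have h5 : 0 <= lam * (`|b| + b) by nra.
  nra.
Qed.
End V.
Section Key.
Context {R : realType}.
Local Notation mu := (@lebesgue_measure R).

Lemma cont_kf (lam y : R) : continuous (kf lam y).
Proof.
move=> x; rewrite /kf; apply: continuous_comp; last exact: continuous_expR.
apply: cvgB; last by apply: cvgMr; apply: cvg_norm; exact: cvg_id.
apply: cvgMl; apply: cvgN.
apply: (@continuous_comp _ _ _ (fun b => y - b) (fun z => z ^+ 2)); last exact: exprn_continuous.
apply: cvgB; [exact: cvg_cst|exact: cvg_id].
Qed.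

Lemma cont_uf (a : R) : continuous (uf a).
Proof.
move=> x; rewrite /uf.
apply: (@continuous_min _ _ (fun _ => 1) (fun b => Num.max 0 (2 - 2 * `|b| / a))).
  exact: cvg_cst.
apply: (@continuous_max _ _ (fun _ => 0) (fun b => (2 - 2 * `|b| / a))).
  exact: cvg_cst.
apply: cvgB; first exact: cvg_cst.
apply: cvgMl; apply: cvgMr; apply: cvg_norm; exact: cvg_id.
Qed.

Lemma cont_w (c : R) : continuous (fun b : R => expR (c * b ^+ 2)).
Proof.
move=> x; apply: continuous_comp; last exact: continuous_expR.
apply: cvgMr; exact: exprn_continuous.
Qed.

Local Open Scope ereal_scope.

Lemma key (lam y a : R) : (0 < a)%R -> (a <= 1/4)%R -> (0 <= lam)%R -> (a * lam <= 1/4)%R ->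
  \int[mu]_b (expR (- (36 / a ^+ 2) * b ^+ 2) * kf lam y b)%:E <=
   ((9/10)%R)%:E * \int[mu]_b (kf lam y b)%:E.
Proof.
move=> a0 a4 l0 al.
set d := (if (0 <= y)%R then 2 * a else - (2 * a))%R.
have hd : (`|d| = 2 * a)%R.
  by rewrite /d; case: ifP => _; rewrite ?normrN ger0_norm // mulr_ge0 // ltW.
set I := \int[mu]_b (kf lam y b)%:E.
set J := \int[mu]_b (uf a b * kf lam y b)%:E.
have mk : measurable_fun setT (kf lam y) := continuous_measurable_fun (cont_kf lam y).
have mu_ : measurable_fun setT (uf a) := continuous_measurable_fun (cont_uf a).
have muk : measurable_fun setT (fun b => uf a b * kf lam y b)%R by exact: measurable_funM.
have I0 : 0 <= I by apply: integral_ge0 => x _; rewrite lee_fin kf_ge0.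
have J0 : 0 <= J by apply: integral_ge0 => x _; rewrite lee_fin mulr_ge0 ?kf_ge0 ?uf_ge0.
have S1 : \int[mu]_b (expR (- (36 / a ^+ 2) * b ^+ 2) * kf lam y b)%:E <= J + ((1/10)%R)%:E * I.
  apply: (@le_trans _ _ (\int[mu]_b ((uf a b * kf lam y b)%:E + ((1/10) * kf lam y b)%R%:E))).
    apply: int_mono => x.
      by rewrite lee_fin mulr_ge0 ?kf_ge0 ?expR_ge0.
    rewrite -EFinD lee_fin -mulrDl; apply: ler_wpM2r; first exact: kf_ge0.
    exact: P1.
  rewrite ge0_integralD //.
  - rewrite leeD2l //; under eq_integral do rewrite EFinM.
    by rewrite ge0_integralZl_EFin // => [x _|]; [rewrite lee_fin kf_ge0|exact/measurable_EFinP].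
  - by move=> x _; rewrite lee_fin mulr_ge0 ?kf_ge0 ?uf_ge0.
  - exact/measurable_EFinP.
  - by move=> x _; rewrite lee_fin mulr_ge0 ?kf_ge0.
  - by apply/measurable_EFinP; apply: measurable_funM.
have S2 : J + \int[mu]_b (uf a (b - d) * kf lam y b)%:E <= I.
  rewrite -ge0_integralD //.
  - apply: int_mono => x.
      by rewrite adde_ge0 // lee_fin mulr_ge0 ?kf_ge0 ?uf_ge0.
    rewrite -EFinD lee_fin -mulrDl -[X in (_ <= X)%R]mul1r.
    by apply: ler_wpM2r; [exact: kf_ge0|exact: P2].
  - by move=> x _; rewrite lee_fin mulr_ge0 ?kf_ge0 ?uf_ge0.
  - exact/measurable_EFinP.
  - by move=> x _; rewrite lee_fin mulr_ge0 ?kf_ge0 ?uf_ge0.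
  - apply/measurable_EFinP; apply: measurable_funM => //.
    apply: continuous_measurable_fun => x; apply: (@continuous_comp _ _ _ (fun b => b - d)%R (uf a)); last exact: cont_uf.
    apply: cvgB; [exact: cvg_id|exact: cvg_cst].
have S3 : \int[mu]_b (uf a (b - d) * kf lam y b)%:E = \int[mu]_b (uf a b * kf lam y (b + d))%:E.
  rewrite (@int_shift _ (fun b => uf a (b - d) * kf lam y b)%R d).
  - by apply: eq_integral => x _; rewrite addrK.
  - move=> x; apply: cvgM; last exact: cont_kf.
    apply: (@continuous_comp _ _ _ (fun b => b - d)%R (uf a)); last exact: cont_uf.
    apply: cvgB; [exact: cvg_id|exact: cvg_cst].
  - by move=> x; rewrite mulr_ge0 ?kf_ge0 ?uf_ge0.
have S4 : ((1/4)%R)%:E * J <= \int[mu]_b (uf a b * kf lam y (b + d))%:E.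
  rewrite /J -ge0_integralZl_EFin //.
  - apply: int_mono => x.
      by rewrite -EFinM lee_fin !mulr_ge0 ?kf_ge0 ?uf_ge0.
    by rewrite -EFinM lee_fin; apply: P3.
  - by move=> x _; rewrite lee_fin mulr_ge0 ?kf_ge0 ?uf_ge0.
  - exact/measurable_EFinP.
have S5 : ((5/4)%R)%:E * J <= I.
  apply: le_trans S2; rewrite S3.
  have -> : (5/4 = 1 + 1/4 :> R)%R by lra.
  by rewrite EFinD ge0_muleDl // mul1e leeD2l.
have S6 : J <= ((4/5)%R)%:E * I.
  have := lee_wpmul2l (_ : 0 <= ((4/5)%R)%:E) S5; rewrite muleA -EFinM.
  have -> : (4 / 5 * (5 / 4) = 1 :> R)%R by field.
  by rewrite mul1e; apply; rewrite lee_fin.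
apply: le_trans S1 _.
apply: le_trans (leeD2r _ S6) _.
rewrite -ge0_muleDl ?lee_fin // -EFinD.
have -> : (4 / 5 + 1 / 10 = 9 / 10 :> R)%R by field.
by [].
Qed.
End Key.
Section Post.
Context {R : realType}.
Local Notation mu := (@lebesgue_measure R).

Lemma norm2_sqr n (b : 'rV[R]_n) : norm2 b ^+ 2 = \sum_(i < n) b 0 i ^+ 2.
Proof. by rewrite /norm2 sqr_sqrtr // sumr_ge0 // => i _; exact: sqr_ge0. Qed.

Lemma kernel_prod n (lam : R) (Y b : 'rV[R]_n) :
  lasso_kernel lam Y b = \prod_i kf lam (Y 0 i) (b 0 i).
Proof.
rewrite /lasso_kernel /kf -expR_sum norm2_sqr /norm1; congr expR.
rewrite mulr_sumr -sumrN mulr_suml -sumrB; apply: eq_bigr => i _.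
by rewrite !mxE mulNr.
Qed.

Local Open Scope ereal_scope.
Lemma lee_prod n (f g : 'I_n -> \bar R) : (forall i, 0 <= f i) -> (forall i, f i <= g i) ->
  \prod_i f i <= \prod_i g i.
Proof.
move=> f0 fg.
suff : 0 <= \prod_i f i /\ \prod_i f i <= \prod_i g i by case.
apply: (big_ind2 (fun x y => 0 <= x /\ x <= y)) => //.
  by move=> x1 x2 y1 y2 [h1 h2] [h3 h4]; split; [exact: mule_ge0|exact: lee_pmul].

Qed.

Lemma prod_scale n (c : R) (g : 'I_n -> \bar R) :
  \prod_i (c%:E * g i) = (c ^+ n)%:E * \prod_i g i.
Proof.
rewrite big_split /=; congr (_ * _).
by rewrite prodEFin prodr_const card_ord.
Qed.
End Post.
Section Post2.
Context {R : realType}.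
Local Notation mu := (@lebesgue_measure R).

Lemma post_bound n (lam r : R) (Y : 'rV[R]_n) : 0 < lam -> 0 <= r ->
  (lasso_post lam Y [set b | (norm2 b <= r)%R] <=
   (expR (36 / (Num.min lam^-1 1 / 4) ^+ 2 * r ^+ 2) * (9/10) ^+ n)%:E)%E.
Proof.
move=> l0 r0.
set m := Num.min lam^-1 1.
have m0 : 0 < m by rewrite /m lt_min invr_gt0 l0 ltr01.
have m1 : m <= 1 by rewrite /m ge_min lexx orbT.
have ml : m * lam <= 1.
  have : m <= lam^-1 by rewrite /m ge_min lexx.
  by move=> h; apply: le_trans (ler_wpM2r (ltW l0) h) _; rewrite mulVf ?gt_eqF.
set a := m / 4.
have a0 : 0 < a by rewrite divr_gt0.
have a4 : a <= 1/4 by rewrite /a ler_pM2r.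
have al : a * lam <= 1/4 by rewrite /a mulrAC ler_pM2r.
set t := 36 / a ^+ 2.
set C := expR (t * r ^+ 2) * (9/10) ^+ n.
have C0 : 0 <= C by rewrite mulr_ge0 ?expR_ge0 // exprn_ge0.
have mkf y : measurable_fun setT (kf lam y) := continuous_measurable_fun (cont_kf lam y).
set K := intRn (fun b => (lasso_kernel lam Y b)%:E).
have HK : K = (\prod_i \int[mu]_x (kf lam (Y 0 i) x)%:E)%E.
  rewrite /K.
  have -> : (fun b => (lasso_kernel lam Y b)%:E) =
            (fun b : 'rV[R]_n => (1 * \prod_i kf lam (Y 0 i) (b 0 i))%:E).
    by apply/funext => b; rewrite kernel_prod mul1r.
  by rewrite (@intRn_prod _ n 1 (fun i => kf lam (Y 0 i))) // ?mul1e // => i x; exact: kf_ge0.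
set A := intRn (fun b : 'rV[R]_n => (\1_[set b | (norm2 b <= r)%R] b * lasso_kernel lam Y b)%:E).
have HA : (A <= (expR (t * r ^+ 2))%:E *
    \prod_i \int[mu]_x (expR (- t * x ^+ 2) * kf lam (Y 0 i) x)%:E)%E.
  rewrite -(@intRn_prod _ n (expR (t * r ^+ 2)) (fun i x => expR (- t * x ^+ 2) * kf lam (Y 0 i) x)); last 3 first.
  - exact: expR_ge0.
  - by move=> i x; rewrite mulr_ge0 ?expR_ge0 ?kf_ge0.
  - move=> i; apply: measurable_funM => //.
    exact: continuous_measurable_fun (cont_w _).
  apply: intRn_mono => b.
    by rewrite lee_fin mulr_ge0 ?expR_ge0 // indicE ler0n.
  rewrite lee_fin kernel_prod big_split /= mulrA.
  apply: ler_wpM2r; first by apply: prodr_ge0 => i _; exact: kf_ge0.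
  rewrite -expR_sum -expRD indicE.
  case: (boolP (b \in [set b | norm2 b <= r])) => [hb|_]; last exact: expR_ge0.
  rewrite -expR0 ler_expR -mulr_sumr mulNr -mulrBr mulr_ge0 //.
    by rewrite /t divr_ge0 // exprn_ge0 // ltW.
  rewrite subr_ge0 -norm2_sqr lerXn2r // ?nnegrE //.
  - by rewrite /norm2 sqrtr_ge0.
  - by move: hb; rewrite inE.
have HAK : (A <= C%:E * K)%E.
  apply: le_trans HA _; rewrite HK /C EFinM -muleA; apply: lee_wpmul2l.
    by rewrite lee_fin expR_ge0.
  rewrite -prod_scale; apply: lee_prod => i.
    by apply: integral_ge0 => x _; rewrite lee_fin mulr_ge0 ?expR_ge0 ?kf_ge0.
  by apply: key => //; exact: ltW.
rewrite /lasso_post -/A -/K.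
have K0 : (0 <= K)%E by apply: intRn_ge0 => b; rewrite lee_fin expR_ge0.
clearbody A K.
have [f0|fn0] := eqVneq (fine K) 0.
  by rewrite f0 invr0 mule0 lee_fin.
clear HK HA; case: K HAK fn0 K0 => [k| |] HAK fn0 K0; last 2 first.
- by rewrite /= eqxx in fn0.
- by rewrite /= eqxx in fn0.
have k0 : 0 < k by rewrite lt_def fn0 /= -lee_fin.
apply: le_trans (lee_wpmul2r _ HAK) _; first by rewrite lee_fin invr_ge0 ltW.
by rewrite /= -!EFinM mulfK ?gt_eqF.
Qed.
End Post2.
Section Main.
Context {R : realType}.
Local Notation mu := (@lebesgue_measure R).

Lemma gauss_prod n (y : 'rV[R]_n) :
  gauss_pdf y = \prod_i normal_pdf 0 1 (y 0 i).
Proof.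
rewrite /gauss_pdf norm2_sqr.
under eq_bigr do rewrite normal_pdfE ?oner_neq0 //.
rewrite big_split /= prodr_const card_ord -expR_sum; congr (_ * _).
  rewrite /normal_peak.
  have e : (1 ^+ 2 * pi *+ 2 = 2 * pi :> R) by rewrite -mulr_natl; ring.
  by rewrite e exprVn.
congr (expR _); rewrite mulNr mulr_suml -sumrN; apply: eq_bigr => i _.
by rewrite /normal_fun subr0 expr1n mulNr.
Qed.

Lemma post_ge0 n (lam : R) (Y : 'rV[R]_n) B : (0 <= lasso_post lam Y B)%E.
Proof.
rewrite /lasso_post; apply: mule_ge0.
  by apply: intRn_ge0 => b; rewrite lee_fin mulr_ge0 ?expR_ge0 // indicE ler0n.
rewrite lee_fin invr_ge0 fine_ge0 //.
by apply: intRn_ge0 => b; rewrite lee_fin expR_ge0.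
Qed.

Lemma E0_bound n (g : 'rV[R]_n -> \bar R) (c : R) : 0 <= c ->
  (forall y, 0 <= g y <= c%:E)%E -> (E0 g <= c%:E)%E.
Proof.
move=> c0 hg; rewrite /E0.
apply: le_trans (_ : intRn (fun y : 'rV[R]_n => (c * \prod_i normal_pdf 0 1 (y 0 i))%:E) <= _)%E.
  apply: intRn_mono => y.
    have /andP[h1 _] := hg y; rewrite mule_ge0 // lee_fin gauss_prod prodr_ge0 // => i _; exact: normal_pdf_ge0.
  have /andP[h1 h2] := hg y.
  have G0 : (0 <= (gauss_pdf y)%:E)%E.
    by rewrite lee_fin gauss_prod prodr_ge0 // => i _; exact: normal_pdf_ge0.
  apply: le_trans (lee_wpmul2l G0 h2) _.
  by rewrite -EFinM gauss_prod mulrC.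
rewrite (@intRn_prod _ n c (fun i => normal_pdf 0 1)) //; last 2 first.
- by move=> i x; exact: normal_pdf_ge0.
- by move=> i; exact: measurable_normal_pdf.
rewrite (eq_bigr (fun _ => 1%E)); last by move=> i _; exact: integral_normal_pdf.
by rewrite big1_eq mule1.
Qed.
End Main.

Lemma q_lt1 (R : realType) : expR (4/81 : R) * (9/10) < 1.
Proof.
have h := @expR_ge1Dx R (- (4/81)).
have e0 : 0 < expR (4/81 : R) := expR_gt0 _.
rewrite expRN in h.
have h2 : (77/81 : R) * expR (4/81) <= 1.
  have := ler_wpM2r (ltW e0) h; rewrite mulVf ?gt_eqF //.
  by move=> h3; apply: le_trans h3; rewrite le_eqVlt; apply/orP; left; apply/eqP; field.
nra.
Qed.

Theorem theorem7 (R : realType) (lam : nat -> R) :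
  (forall n, 0 < lam n) ->
  (fun n : nat => Num.sqrt (n%:R) / lam n) @ \oo --> +oo ->
  exists2 delta : R, 0 < delta &
    (fun n : nat =>
       E0 (fun Y : 'rV[R]_n =>
         lasso_post (lam n) Y
           [set b : 'rV[R]_n | norm2 b <=
              delta * Num.sqrt (n%:R) * Num.min (lam n)^-1 1]))
      @ \oo --> 0%E.
Proof.
move=> l0 _; exists (1/108) => //.
set q := expR (4/81 : R) * (9/10).
have q0 : 0 <= q by rewrite mulr_ge0 ?expR_ge0.
have q1 : q < 1 := q_lt1 R.
have B : forall n, (0 <= E0 (fun Y : 'rV[R]_n =>
         lasso_post (lam n) Y
           [set b : 'rV[R]_n | (norm2 b <=
              1/108 * Num.sqrt (n%:R) * Num.min (lam n)^-1 1)%R]) <= (q ^+ n)%:E)%E.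
  move=> n.
  set m := Num.min (lam n)^-1 1.
  have m0 : 0 < m by rewrite /m lt_min invr_gt0 l0 ltr01.
  have r0 : 0 <= 1/108 * Num.sqrt (n%:R) * m by rewrite !mulr_ge0 ?sqrtr_ge0 // ltW.
  apply/andP; split.
    rewrite /E0; apply: intRn_ge0 => y; rewrite mule_ge0 ?post_ge0 // lee_fin gauss_prod.
    by apply: prodr_ge0 => i _; exact: normal_pdf_ge0.
  apply: E0_bound; first exact: exprn_ge0.
  move=> Y; rewrite post_ge0 /=.
  apply: le_trans (@post_bound _ n (lam n) _ Y (l0 n) r0) _.
  rewrite lee_fin -/m /q [X in _ <= X]exprMn -expRM_natl; apply: ler_wpM2r; first exact: exprn_ge0.
  rewrite ler_expR !exprMn sqr_sqrtr ?ler0n //.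
  rewrite le_eqVlt; apply/orP; left; apply/eqP; field.
  by rewrite gt_eqF.
apply: (@squeeze_cvge _ _ _ _ (fun _ => 0%E) _ (fun n => (q ^+ n)%:E)).
- by apply: nearW => n; exact: B.
- exact: cvg_cst.
- apply: cvg_EFin; first by apply: nearW.
  by apply: cvg_expr; rewrite ger0_norm.
Qed.
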